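(* Let $\delta>0$ and let $S=\{p_1,\dots,p_n\}$ be a set of $n$ points in $\mathbb{R}^d$. Determining all pairs $i\ne j$ such that $\|p_i-p_j\|_\infty\le\delta$ can be done using $O(dn\log n)$ pairwise comparisons of real numbers (i.e., by a 2-linear decision tree of depth $O(dn\log n)$).
   Context: $\|x\|_\infty=\max_k |x[k]|$. A $k$-linear decision tree is one in which each branching is based on the sign of a linear expression with at most $k$ terms; its complexity is its depth. *)

(* Defs.v *)
From HB Require Import structures.
From mathcomp Require Import all_boot all_order all_algebra.
From mathcomp Require Import reals.
Set Implicit Arguments. Unset Strict Implicit. Unset Printing Implicit Defensive.
Import Order.TTheory GRing.Theory Num.Theory.
Local Open Scope ring_scope.

(* An internal node holds a linear expression  sum_t a_t * x(v_t) + c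
   (a list of (coefficient, variable) terms plus a constant term) and
   branches three ways on its sign (<0, =0, >0). *)
Inductive ldt (R V O : Type) : Type :=
| LLeaf of O
| LNode of seq (R * V) & R & ldt R V O & ldt R V O & ldt R V O.

Arguments LLeaf {R V O}.
Arguments LNode {R V O}.

Definition lin_val (R : realType) (V : Type) (a : seq (R * V)) (c : R)
  (x : V -> R) : R := \sum_(t <- a) t.1 * x t.2 + c.

Fixpoint ldt_eval (R : realType) (V O : Type) (T : ldt R V O) (x : V -> R) : O :=
  match T with
  | LLeaf o => o
  | LNode a c tl te tg =>
      let v := lin_val a c x in
      if v < 0 then ldt_eval tl x
      else if v == 0 then ldt_eval te x
      else ldt_eval tg x
  end.

Fixpoint ldt_depth (R V O : Type) (T : ldt R V O) : nat :=
  match T with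
  | LLeaf _ => 0%N
  | LNode _ _ tl te tg =>
      (maxn (ldt_depth tl) (maxn (ldt_depth te) (ldt_depth tg))).+1
  end.

Fixpoint ldt_klinear (R V O : Type) (k : nat) (T : ldt R V O) : bool :=
  match T with
  | LLeaf _ => true
  | LNode a _ tl te tg =>
      [&& (size a <= k)%N, ldt_klinear k tl, ldt_klinear k te & ldt_klinear k tg]
  end.

Definition linf_norm (R : realType) (d : nat) (x : 'I_d -> R) : R :=
  \big[Num.max/0]_(k < d) `|x k|.

Definition close_pairs (R : realType) (n d : nat) (delta : R)
  (p : 'I_n -> 'I_d -> R) : {set 'I_n * 'I_n} :=
  [set ij : 'I_n * 'I_n | (ij.1 != ij.2) &&
     (linf_norm (fun k => p ij.1 k - p ij.2 k) <= delta)].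

(* Main.v *)
Require Import Defs.
From HB Require Import structures.
From mathcomp Require Import all_boot all_order all_algebra.
From mathcomp Require Import reals.
From mathcomp Require Import zify ring lra.
Set Implicit Arguments. Unset Strict Implicit. Unset Printing Implicit Defensive.
Import Order.TTheory GRing.Theory Num.Theory.
Local Open Scope ring_scope.

Fixpoint bindT (R V A B : Type) (T : ldt R V A) (f : A -> ldt R V B) : ldt R V B :=
  match T with
  | LLeaf o => f o
  | LNode a c tl te tg => LNode a c (bindT tl f) (bindT te f) (bindT tg f)
  end.

Lemma bindT_eval (R : realType) V A B (T : ldt R V A) (f : A -> ldt R V B) x :
  ldt_eval (bindT T f) x = ldt_eval (f (ldt_eval T x)) x.
Proof. elim: T => [o|a c tl IHl te IHe tg IHg] //=.
by rewrite IHl IHe IHg; case: ifP => //; case: ifP.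
Qed.

Lemma bindT_depth R V A B (T : ldt R V A) (f : A -> ldt R V B) M :
  (forall o, (ldt_depth (f o) <= M)%N) ->
  (ldt_depth (bindT T f) <= ldt_depth T + M)%N.
Proof.
move=> hf; elim: T => [o|a c tl IHl te IHe tg IHg] /=; first by apply: hf.
lia.
Qed.

Lemma bindT_klin R V A B (T : ldt R V A) (f : A -> ldt R V B) k :
  ldt_klinear k T -> (forall o, ldt_klinear k (f o)) ->
  ldt_klinear k (bindT T f).
Proof.
move=> hT hf; elim: T hT => [o|a c tl IHl te IHe tg IHg] //=.
by case/and4P=> -> /IHl -> /IHe -> /IHg ->.
Qed.



Definition code (n : nat) (u : 'I_n * bool) : nat := (u.2 * n + u.1)%N.
Definition tie (n : nat) (u v : 'I_n * bool) : bool := (code u <= code v)%N.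

Definition valI (R : realType) (n d : nat) (delta : R) (k : 'I_d)
  (x : 'I_n * 'I_d -> R) (u : 'I_n * bool) : R :=
  x (u.1, k) + (if u.2 then delta else 0).

Definition leI (R : realType) (n d : nat) (delta : R) (k : 'I_d)
  (x : 'I_n * 'I_d -> R) (u v : 'I_n * bool) : bool :=
  (valI delta k x u < valI delta k x v) ||
  ((valI delta k x u == valI delta k x v) && tie u v).

Definition cmpT (R : realType) (n d : nat) (delta : R) (k : 'I_d) O
  (u v : 'I_n * bool) (tT tF : ldt R ('I_n * 'I_d) O) : ldt R ('I_n * 'I_d) O :=
  LNode [:: (1, (u.1, k)); (-1, (v.1, k))]
        ((if u.2 then delta else 0) - (if v.2 then delta else 0))
        tT (if tie u v then tT else tF) tF.


Lemma cmpT_eval (R : realType) (n d : nat) (delta : R) (k : 'I_d) O u v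
  (tT tF : ldt R ('I_n * 'I_d) O) x :
  ldt_eval (cmpT delta k u v tT tF) x =
  if leI delta k x u v then ldt_eval tT x else ldt_eval tF x.
Proof.
rewrite /cmpT /=.
have -> : lin_val [:: (1, (u.1, k)); (-1, (v.1, k))]
        ((if u.2 then delta else 0) - (if v.2 then delta else 0)) x
   = valI delta k x u - valI delta k x v.
  rewrite /lin_val !big_cons big_nil /valI /=; lra.
rewrite /leI subr_lt0 subr_eq0.
case: (ltgtP (valI delta k x u) (valI delta k x v)) => //=.
by case: (tie u v).
Qed.

Lemma cmpT_depth (R : realType) (n d : nat) (delta : R) (k : 'I_d) O u v
  (tT tF : ldt R ('I_n * 'I_d) O) M :
  (ldt_depth tT <= M)%N -> (ldt_depth tF <= M)%N ->
  (ldt_depth (cmpT delta k u v tT tF) <= M.+1)%N.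
Proof. rewrite /cmpT /=; case: (tie u v) => /=; lia. Qed.

Lemma cmpT_klin (R : realType) (n d : nat) (delta : R) (k : 'I_d) O u v
  (tT tF : ldt R ('I_n * 'I_d) O) :
  ldt_klinear 2 tT -> ldt_klinear 2 tF ->
  ldt_klinear 2 (cmpT delta k u v tT tF).
Proof. by move=> h1 h2; rewrite /cmpT /= h1 h2; case: (tie u v) => /=; rewrite ?h1 ?h2. Qed.

Opaque cmpT.

Fixpoint mergeT (R : realType) (n d : nat) (delta : R) (k : 'I_d)
  (s1 s2 : seq ('I_n * bool)) : ldt R ('I_n * 'I_d) (seq ('I_n * bool)) :=
  match s1 with
  | [::] => LLeaf s2
  | x1 :: s1' =>
    let fix m2 s2 :=
      match s2 with
      | [::] => LLeaf s1
      | x2 :: s2' =>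
        cmpT delta k x1 x2 (bindT (mergeT delta k s1' s2) (fun r => LLeaf (x1 :: r)))
                           (bindT (m2 s2') (fun r => LLeaf (x2 :: r)))
      end in m2 s2
  end.

Lemma mergeT_eval (R : realType) (n d : nat) (delta : R) (k : 'I_d) s1 s2 x :
  ldt_eval (@mergeT R n d delta k s1 s2) x = merge (leI delta k x) s1 s2.
Proof.
elim: s1 s2 => [|x1 s1 IH] s2 //=.
elim: s2 => [|x2 s2 IH2] //=.
rewrite cmpT_eval !bindT_eval /= IH IH2.
by case: leI.
Qed.

Lemma mergeT_depth (R : realType) (n d : nat) (delta : R) (k : 'I_d) s1 s2 :
  (ldt_depth (@mergeT R n d delta k s1 s2) <= size s1 + size s2)%N.
Proof.
elim: s1 s2 => [|x1 s1 IH] s2 //=.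
elim: s2 => [|x2 s2 IH2] //=.
rewrite addnS; apply: cmpT_depth.
  apply: leq_trans (bindT_depth _ (M:=0) _) _ => //.
  by rewrite addn0; apply: leq_trans (IH _) _; rewrite /= addnS.
apply: leq_trans (bindT_depth _ (M:=0) _) _ => //.
by rewrite addn0; apply: leq_trans IH2 _; rewrite addSn.
Qed.

Lemma mergeT_klin (R : realType) (n d : nat) (delta : R) (k : 'I_d) s1 s2 :
  ldt_klinear 2 (@mergeT R n d delta k s1 s2).
Proof.
elim: s1 s2 => [|x1 s1 IH] s2 //=.
elim: s2 => [|x2 s2 IH2] //=.
by apply: cmpT_klin; apply: bindT_klin.
Qed.



Lemma code_inj n : injective (@code n).
Proof.
move=> [i b] [j b']; rewrite /code /=.
have hi := ltn_ord i; have hj := ltn_ord j.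
case: b; case: b' => /= h; rewrite ?mul1n ?mul0n ?add0n in h.
- by have -> : i = j by apply: val_inj => /=; lia.
- lia.
- lia.
- by have -> : i = j by apply: val_inj => /=; lia.
Qed.

Section LeI.
End LeI.

Lemma leI_refl (R : realType) n d (delta : R) (k : 'I_d) x : reflexive (@leI R n d delta k x).
Proof. by move=> u; rewrite /leI eqxx /tie leqnn orbT. Qed.

Lemma leI_total (R : realType) n d (delta : R) (k : 'I_d) x : total (@leI R n d delta k x).
Proof.
move=> u v; rewrite /leI /tie.
case: (ltgtP (valI delta k x u) (valI delta k x v)) => //= _.
exact: leq_total.
Qed.

Lemma leI_trans (R : realType) n d (delta : R) (k : 'I_d) x : transitive (@leI R n d delta k x).
Proof.
move=> v u w; rewrite /leI /tie.
case/orP=> [h1|/andP[/eqP h1 h1']]; case/orP=> [h2|/andP[/eqP h2 h2']].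
- by rewrite (lt_trans h1 h2).
- by rewrite -h2 h1.
- by rewrite h1 h2.
- by rewrite h1 h2 eqxx (leq_trans h1' h2') orbT.
Qed.

Lemma leI_anti (R : realType) n d (delta : R) (k : 'I_d) x u v :
  @leI R n d delta k x u v -> leI delta k x v u -> u = v.
Proof.
rewrite /leI /tie.
case: (ltgtP (valI delta k x u) (valI delta k x v)) => //= _ h1 h2.
by apply: code_inj; apply/eqP; rewrite eqn_leq h1 h2.
Qed.

Fixpoint msortT (R : realType) (n d : nat) (delta : R) (k : 'I_d) (m : nat)
  (s : seq ('I_n * bool)) : ldt R ('I_n * 'I_d) (seq ('I_n * bool)) :=
  match m with
  | 0 => LLeaf s
  | m'.+1 =>
    bindT (msortT delta k m' (take (2 ^ m') s)) (fun r1 =>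
    bindT (msortT delta k m' (drop (2 ^ m') s)) (fun r2 =>
      if (size r1 + size r2 <= size s)%N then mergeT delta k r1 r2 else LLeaf s))
  end.

Lemma msortT_depth (R : realType) (n d : nat) (delta : R) (k : 'I_d) m s :
  (ldt_depth (@msortT R n d delta k m s) <= m * size s)%N.
Proof.
elim: m s => [|m IH] s //=.
have hs : size s = (size (take (2 ^ m) s) + size (drop (2 ^ m) s))%N.
  by rewrite -size_cat cat_take_drop.
apply: leq_trans (bindT_depth _ (M := (m * size (drop (2 ^ m) s) + size s)%N) _) _.
  move=> r1; apply: leq_trans (bindT_depth _ (M := size s) _) _.
    move=> r2; case: ifP => // h; apply: leq_trans (mergeT_depth _ _ _ _) h.
  by rewrite leq_add2r IH.
have := IH (take (2 ^ m) s); lia.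
Qed.

Lemma msortT_klin (R : realType) (n d : nat) (delta : R) (k : 'I_d) m s :
  ldt_klinear 2 (@msortT R n d delta k m s).
Proof.
elim: m s => [|m IH] s //=.
apply: bindT_klin => // r1; apply: bindT_klin => // r2.
by case: ifP => // _; apply: mergeT_klin.
Qed.

Lemma msortT_eval (R : realType) (n d : nat) (delta : R) (k : 'I_d) m s x :
  (size s <= 2 ^ m)%N ->
  let r := ldt_eval (@msortT R n d delta k m s) x in
  sorted (leI delta k x) r /\ perm_eq r s.
Proof.
elim: m s => [|m IH] s /=.
  by case: s => [|a [|b s]] //= _; split.
move=> hs; rewrite !bindT_eval.
have [st pt] := IH (take (2 ^ m) s) ltac:(rewrite size_take_min; lia).
have hd : (size (drop (2 ^ m) s) <= 2 ^ m)%N.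
  rewrite size_drop; move: hs; rewrite expnS. lia.
have [sd pd] := IH (drop (2 ^ m) s) hd.
set r1 := ldt_eval _ x in st pt *.
set r2 := ldt_eval _ x in sd pd *.
have -> : (size r1 + size r2 <= size s)%N.
  by rewrite (perm_size pt) (perm_size pd) -size_cat cat_take_drop.
rewrite mergeT_eval; split.
  by apply: merge_sorted => //; apply: leI_total.
rewrite perm_merge -[X in perm_eq _ X](cat_take_drop (2 ^ m)).
by apply: perm_cat.
Qed.



Definition items (n : nat) : seq ('I_n * bool) := enum [set: 'I_n * bool].

Definition sortk (R : realType) (n d : nat) (delta : R) (k : 'I_d) :=
  @msortT R n d delta k (up_log 2 n).+1 (items n).

Fixpoint allTr (R : realType) (n d : nat) (delta : R) (ks : seq 'I_d) :
  ldt R ('I_n * 'I_d) ('I_d -> seq ('I_n * bool)) :=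
  match ks with
  | [::] => LLeaf (fun _ => [::])
  | k :: ks' =>
    bindT (@sortk R n d delta k) (fun s =>
    bindT (@allTr R n d delta ks') (fun g =>
      LLeaf (fun k' => if k' == k then s else g k')))
  end.

Lemma allT_depth (R : realType) (n d : nat) (delta : R) ks :
  (ldt_depth (@allTr R n d delta ks) <= size ks * ((up_log 2 n).+1 * (n * 2)))%N.
Proof.
have hi : size (items n) = (n * 2)%N by rewrite /items -cardE cardsT card_prod card_ord card_bool.
elim: ks => [|k ks IH] //=.
apply: leq_trans (bindT_depth _ (M := (size ks * ((up_log 2 n).+1 * (n * 2)))%N) _) _.
  move=> s; apply: leq_trans (bindT_depth _ (M := 0) _) _ => //.
  by rewrite addn0.
have := msortT_depth delta k (up_log 2 n).+1 (items n).
rewrite /sortk hi mulSn; lia.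
Qed.

Lemma allT_klin (R : realType) (n d : nat) (delta : R) ks :
  ldt_klinear 2 (@allTr R n d delta ks).
Proof.
elim: ks => [|k ks IH] //=.
apply: bindT_klin; first exact: msortT_klin.
by move=> s; apply: bindT_klin.
Qed.

Lemma allT_eval (R : realType) (n d : nat) (delta : R) ks x k :
  k \in ks -> ldt_eval (@allTr R n d delta ks) x k = ldt_eval (@sortk R n d delta k) x.
Proof.
elim: ks => [|k0 ks IH] //.
rewrite inE.
have -> : @allTr R n d delta (k0 :: ks) = bindT (@sortk R n d delta k0) (fun s =>
    bindT (@allTr R n d delta ks) (fun g =>
      LLeaf (fun k' => if k' == k0 then s else g k'))) by [].
rewrite [in LHS]bindT_eval; cbv beta; rewrite [in LHS]bindT_eval.
have ev : forall (o : 'I_d -> seq ('I_n * bool)), ldt_eval (LLeaf o) x = o by [].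
rewrite ev; cbv beta.
case: eqP => [-> //|_ h]; exact: (IH h).
Qed.

Lemma sortk_spec (R : realType) (n d : nat) (delta : R) (k : 'I_d) x :
  let s := ldt_eval (@sortk R n d delta k) x in
  sorted (leI delta k x) s /\ forall u, u \in s.
Proof.
have hi : size (items n) = (n * 2)%N by rewrite /items -cardE cardsT card_prod card_ord card_bool.
have H : (size (items n) <= 2 ^ (up_log 2 n).+1)%N.
  rewrite hi expnS.
  have := @up_logP 2 n isT; lia.
have [st pt] := @msortT_eval R n d delta k (up_log 2 n).+1 (items n) x H.
rewrite /sortk; cbv zeta; split; first exact: st.
by move=> u; rewrite (perm_mem pt) /items mem_enum in_setT.
Qed.

Lemma idx_le (R : realType) (n d : nat) (delta : R) (k : 'I_d) x s u v :
  sorted (@leI R n d delta k x) s -> u \in s -> v \in s ->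
  (index u s <= index v s)%N = leI delta k x u v.
Proof.
move=> st us vs; apply/idP/idP.
  by apply: (sorted_leq_index (@leI_trans _ _ _ _ _ _) (@leI_refl _ _ _ _ _ _) st).
move=> h; rewrite leqNgt; apply/negP => h2.
have h3 := sorted_ltn_index (@leI_trans _ _ _ _ _ _) st v u vs us h2.
by move: h2; rewrite (leI_anti h h3) ltnn.
Qed.

Lemma leI_AB (R : realType) (n d : nat) (delta : R) (k : 'I_d) x i j :
  @leI R n d delta k x (i, false) (j, true) = (x (i, k) <= x (j, k) + delta).
Proof.
rewrite /leI /tie /code /valI /= addr0.
have -> : (0 * n + i <= 1 * n + j)%N by rewrite mul0n mul1n add0n; apply: leq_trans (ltnW (ltn_ord i)) (leq_addr _ _).
by rewrite andbT le_eqVlt orbC.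
Qed.



Definition outset (n d : nat) (g : 'I_d -> seq ('I_n * bool)) : {set 'I_n * 'I_n} :=
  [set ij : 'I_n * 'I_n | (ij.1 != ij.2) && [forall k,
     (index (ij.1, false) (g k) <= index (ij.2, true) (g k))%N &&
     (index (ij.2, false) (g k) <= index (ij.1, true) (g k))%N]].

Lemma linf_le (R : realType) (d : nat) (f : 'I_d -> R) (delta : R) :
  0 <= delta -> (linf_norm f <= delta) = [forall k, `|f k| <= delta].
Proof.
move=> h0; apply/idP/forallP.
  by move/bigmax_leP=> [_ H] k; apply: H.
by move=> H; apply/bigmax_leP; split.
Qed.

Theorem corollary1 (R : realType) :
  exists C : nat, forall (d n : nat), (2 <= n)%N ->
  forall delta : R, 0 < delta ->
  exists T : ldt R ('I_n * 'I_d) {set 'I_n * 'I_n},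
    ldt_klinear 2 T /\
    (ldt_depth T <= C * d * n * up_log 2 n)%N /\
    forall p : 'I_n -> 'I_d -> R, injective p ->
      ldt_eval T (fun v => p v.1 v.2) = close_pairs delta p.
Proof.
exists 4%N => d n hn delta hdelta.
exists (bindT (@allTr R n d delta (enum 'I_d)) (fun g => LLeaf (outset g))).
split; first by apply: bindT_klin => //; apply: allT_klin.
split.
  apply: leq_trans (bindT_depth _ (M := 0) _) _ => //.
  have := @allT_depth R n d delta (enum 'I_d).
  rewrite size_enum_ord addn0.
  have : (0 < up_log 2 n)%N by rewrite up_log_gt0.
  nia.
move=> p _; rewrite bindT_eval /=.
apply/setP => -[i j]; rewrite !inE /=; congr andb.
rewrite linf_le ?ltW //; apply: eq_forallb => k.
rewrite allT_eval ?mem_enum //.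
have [st allin] := @sortk_spec R n d delta k (fun v => p v.1 v.2).
rewrite !(idx_le st (allin _) (allin _)) !leI_AB /= ler_norml.
apply/idP/idP.
  case/andP=> h1 h2; apply/andP; split; lra.
case/andP=> h1 h2; apply/andP; split; lra.
Qed.
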